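(* Let $p,q,r$ be integers with $1<p<q<r$, $p$ odd and $pq+pr-qr=1$. Then $p+1\le q\le 2p-1$. *)

(* Defs.v *)
From Stdlib Require Import ZArith Lia.

(* Main.v *)
Require Import Defs.
From Stdlib Require Import ZArith Lia Psatz.
Open Scope Z_scope.

Theorem lemma3p1 (p q r : Z)
  (h1p : 1 < p) (hpq : p < q) (hqr : q < r)
  (hodd : Z.Odd p)
  (heq : p * q + p * r - q * r = 1) :
  p + 1 <= q <= 2 * p - 1.
Proof.
  assert (H : (q - p) * (r - p) = p * p - 1) by nia.
  split; [lia|].
  destruct (Z_le_gt_dec (q - p) (p - 1)); [lia|].
  exfalso. assert (p <= q - p) by lia. assert (p < r - p) by lia. nia.
Qed.
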